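(* Let $(\mathcal{X},d)$ be a finite metric space with initial forest given by a partition $\mathcal{P}=\{P_1,\dots,P_t\}$ of $\mathcal{X}$ and spanning trees $T_i$ on the parts with edge union $E_t$, and let $\gamma=\gamma(\mathcal{P})$ be its overlap parameter. Let $R=\{R_i : i\in[t]\}$ with each $R_i\subseteq P_i$ nonempty, and set $$\alpha = 1+\frac{\mathrm{cost}(\mathcal{P},R)}{w_{\mathcal{X}}(E_t)}.$$ Then the spanning tree $\hat T$ returned by $\textsf{MultiRepMFC}(R)$ satisfies $w_{\mathcal{X}}(\hat T)\le \alpha\, w_{\mathcal{X}}(T^* )$, where $T^*$ is an optimal solution of the Metric Forest Completion problem (i.e. it is an $\alpha$-approximation for MFC), and $w_{\mathcal{X}}(\hat T)\le \alpha\gamma\, w_{\mathcal{X}}(T_{\mathcal{X}})$ where $T_{\mathcal{X}}$ is a minimum spanning tree of $G_{\mathcal{X}}$ (i.e. it is an $(\alpha\gamma)$-approximation for metric MST).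
   Context: $(\mathcal{X},d)$ is a finite metric space, $\mathcal{X}=\{x_1,\dots,x_n\}$, and $G_{\mathcal{X}}$ is the complete graph on $\mathcal{X}$ with edge weights $w_{\mathcal{X}}(u,v)=d(u,v)$; for an edge set $F$, $w_{\mathcal{X}}(F)=\sum_{e\in F}w_{\mathcal{X}}(e)$. For $A,B\subseteq\mathcal{X}$, $d(A,B)=\min_{a\in A,b\in B}d(a,b)$. An initial forest consists of a partition $\mathcal{P}=\{P_1,\dots,P_t\}$ of $\mathcal{X}$ and, for each $i$, a spanning tree $T_i$ of the complete graph on $P_i$; $E_t$ is the union of the edge sets of the $T_i$. The Metric Forest Completion (MFC) problem is: find a minimum-weight spanning tree of $G_{\mathcal{X}}$ whose edge set contains $E_t$. Overlap parameter: let $\mathcal{T}_{\mathcal{X}}$ be the set of minimum spanning trees of $G_{\mathcal{X}}$ and for $T\in\mathcal{T}_{\mathcal{X}}$ let $T(\mathcal{P})$ be the set of edges of $T$ whose two endpoints lie in the same part of $\mathcal{P}$; then $\gamma(\mathcal{P})=w_{\mathcal{X}}(E_t)/\max_{T\in\mathcal{T}_{\mathcal{X}}}w_{\mathcal{X}}(T(\mathcal{P}))$. Cost: $\mathrm{cost}(P_i,R_i)=\max_{x\in P_i}\min_{r\in R_i}d(x,r)$ and $\mathrm{cost}(\mathcal{P},R)=\sum_{i=1}^t\mathrm{cost}(P_i,R_i)$. Algorithm $\textsf{MultiRepMFC}(R)$: for each pair $i\ne j$ in $[t]$ set $\hat w(v_i,v_j)=\min\{d(P_i,R_j),d(P_j,R_i)\}$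 and record a pair of points $(x,y)$ attaining this minimum; compute a minimum spanning tree $\hat T_{\mathcal{P}}$ of the complete graph on nodes $v_1,\dots,v_t$ with weights $\hat w$; return the spanning tree $\hat T$ of $G_{\mathcal{X}}$ consisting of $E_t$ together with the recorded point pairs corresponding to the edges of $\hat T_{\mathcal{P}}$. *)

(* Defs.v *)
From HB Require Import structures.
From mathcomp Require Import all_boot all_order all_algebra.
Set Implicit Arguments.
Unset Strict Implicit.
Unset Printing Implicit Defensive.
Import Order.TTheory GRing.Theory Num.Theory.
Local Open Scope ring_scope.

(* minimum / maximum of f over a finite set S (meaningful for S nonempty;
   the default value 0 for empty S is never used in the theorem). *)
Definition fmin {R : realDomainType} {U : finType} (S : {set U}) (f : U -> R) : R :=
  if [pick x in S] is Some x0 then \big[Num.min/f x0]_(x in S) f x else 0.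
Definition fmax {R : realDomainType} {U : finType} (S : {set U}) (f : U -> R) : R :=
  if [pick x in S] is Some x0 then \big[Num.max/f x0]_(x in S) f x else 0.

(* weight of an edge e = {x,y} under a (symmetric) weight function c: c x y *)
Definition edge_w {R : realDomainType} {V : finType} (c : V -> V -> R) (e : {set V}) : R :=
  fmin [set p in setX e e | p.1 != p.2] (fun p => c p.1 p.2).

Definition weight {R : realDomainType} {V : finType} (c : V -> V -> R)
  (F : {set {set V}}) : R := \sum_(e in F) edge_w c e.

Definition adj {V : finType} (F : {set {set V}}) : rel V :=
  [rel x y | [set x; y] \in F].

Definition is_spanning_tree {V : finType} (S : {set V}) (F : {set {set V}}) : bool :=
  [&& [forall e in F, (#|e| == 2) && (e \subset S)],
      [forall x in S, forall y in S, connect (adj F) x y] &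
      [forall e in F, forall x in e, forall y in e,
          (x != y) ==> ~~ connect (adj (F :\ e)) x y]].

Definition is_MST {R : realDomainType} {V : finType} (S : {set V})
  (c : V -> V -> R) (F : {set {set V}}) : bool :=
  is_spanning_tree S F &&
  [forall F' : {set {set V}}, is_spanning_tree S F' ==> (weight c F <= weight c F')].

Definition is_metric {R : realDomainType} {T : finType} (d : T -> T -> R) : Prop :=
  [/\ forall x y, d x y = 0 <-> x = y,
      forall x y, d x y = d y x &
      forall x y z, d x z <= d x y + d y z].

Definition is_initial_forest {T : finType} (P : {set {set T}})
  (Tr : {set T} -> {set {set T}}) : Prop :=
  partition P [set: T] /\ forall A, A \in P -> is_spanning_tree A (Tr A).

Definition Et {T : finType} (P : {set {set T}}) (Tr : {set T} -> {set {set T}})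
  : {set {set T}} := \bigcup_(A in P) Tr A.

Definition is_MFC_opt {R : realDomainType} {T : finType} (d : T -> T -> R)
  (P : {set {set T}}) (Tr : {set T} -> {set {set T}}) (F : {set {set T}}) : bool :=
  [&& is_spanning_tree [set: T] F, Et P Tr \subset F &
      [forall F' : {set {set T}},
         (is_spanning_tree [set: T] F' && (Et P Tr \subset F'))
           ==> (weight d F <= weight d F')]].

Definition within_parts {T : finType} (P : {set {set T}}) (F : {set {set T}})
  : {set {set T}} := [set e in F | [exists A in P, e \subset A]].

Definition gamma_den {R : realDomainType} {T : finType} (d : T -> T -> R)
  (P : {set {set T}}) : R :=
  fmax [set F | is_MST [set: T] d F] (fun F => weight d (within_parts P F)).

Definition gamma {R : realFieldType} {T : finType} (d : T -> T -> R)
  (P : {set {set T}}) (Tr : {set T} -> {set {set T}}) : R :=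
  weight d (Et P Tr) / gamma_den d P.

Definition setdist {R : realDomainType} {T : finType} (d : T -> T -> R)
  (A B : {set T}) : R := fmin (setX A B) (fun p => d p.1 p.2).

Definition cost {R : realDomainType} {T : finType} (d : T -> T -> R)
  (A RA : {set T}) : R := fmax A (fun x => fmin RA (fun r => d x r)).
Definition costP {R : realDomainType} {T : finType} (d : T -> T -> R)
  (P : {set {set T}}) (Rep : {set T} -> {set T}) : R :=
  \sum_(A in P) cost d A (Rep A).

Definition alpha {R : realFieldType} {T : finType} (d : T -> T -> R)
  (P : {set {set T}}) (Tr : {set T} -> {set {set T}}) (Rep : {set T} -> {set T}) : R :=
  1 + costP d P Rep / weight d (Et P Tr).

(* the weights hat w(v_A, v_B) of the contracted graph (vertices = parts) *)
Definition hatw {R : realDomainType} {T : finType} (d : T -> T -> R)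
  (Rep : {set T} -> {set T}) (A B : {set T}) : R :=
  Num.min (setdist d A (Rep B)) (setdist d B (Rep A)).

(* Th is a possible output of MultiRepMFC(R): for some MST TP of the
   contracted complete graph on the parts with weights hatw, and some
   recorded minimizing pairs pr (any tie-breaking), Th is E_t together with
   the recorded pairs of the edges of TP. *)
Definition MultiRepMFC_output {R : realDomainType} {T : finType} (d : T -> T -> R)
  (P : {set {set T}}) (Tr : {set T} -> {set {set T}}) (Rep : {set T} -> {set T})
  (Th : {set {set T}}) : Prop :=
  exists (TP : {set {set {set T}}}) (pr : {set {set T}} -> T * T),
    [/\ is_MST P (hatw d Rep) TP,
        (forall e, e \in TP -> exists A B,
            [/\ e = [set A; B], A != B,
                ((pr e).1 \in A /\ (pr e).2 \in Rep B) \/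
                ((pr e).1 \in B /\ (pr e).2 \in Rep A) &
                d (pr e).1 (pr e).2 = hatw d Rep A B]) &
        Th = Et P Tr :|: [set [set (pr e).1; (pr e).2] | e in TP]].

(* Main.v *)
Require Import Defs.
From HB Require Import structures.
From mathcomp Require Import all_boot all_order all_algebra.
From mathcomp Require Import ring lra.
Import Order.TTheory GRing.Theory Num.Theory.
Local Open Scope ring_scope.

Section Fm.
Variables (R : realDomainType) (U : finType).
Implicit Types (S : {set U}) (f : U -> R).

Lemma fmin_le S f x : x \in S -> fmin S f <= f x.
Proof.
move=> xS; rewrite /fmin; case: pickP => [x0 _|/(_ x)]; last by rewrite xS.
by rewrite (bigD1 x) //= ge_min lexx.
Qed.

Lemma fmin_in S f x : x \in S -> exists2 y, y \in S & fmin S f = f y.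
Proof.
move=> xS; rewrite /fmin; case: pickP => [x0 x0S|/(_ x)]; last by rewrite xS.
elim/big_ind: _ => //; first by exists x0.
  move=> a b [y yS ->] [z zS ->]; case: (leP (f y) (f z)) => h.
    by exists y.
  by exists z.
by move=> i iS; exists i.
Qed.

Lemma fmin_ge0 S f : (forall x, x \in S -> 0 <= f x) -> 0 <= fmin S f.
Proof.
move=> H; case: (set_0Vmem S) => [->|[x xS]].
  by rewrite /fmin; case: pickP => [x0|//]; rewrite inE.
by have [y yS ->] := fmin_in S f x xS; apply: H.
Qed.

Lemma fmin_empty S f : S = set0 -> fmin S f = 0.
Proof. by move=> ->; rewrite /fmin; case: pickP => [x0|//]; rewrite inE. Qed.

Lemma fmax_ge S f x : x \in S -> f x <= fmax S f.
Proof.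
move=> xS; rewrite /fmax; case: pickP => [x0 _|/(_ x)]; last by rewrite xS.
by rewrite (bigD1 x) //= le_max lexx.
Qed.

Lemma fmax_in S f x : x \in S -> exists2 y, y \in S & fmax S f = f y.
Proof.
move=> xS; rewrite /fmax; case: pickP => [x0 x0S|/(_ x)]; last by rewrite xS.
elim/big_ind: _ => //; first by exists x0.
  move=> a b [y yS ->] [z zS ->]; case: (leP (f y) (f z)) => h.
    by exists z.
  by exists y.
by move=> i iS; exists i.
Qed.

Lemma fmax_ge0 S f : (forall x, x \in S -> 0 <= f x) -> 0 <= fmax S f.
Proof.
move=> H; case: (set_0Vmem S) => [->|[x xS]].
  by rewrite /fmax; case: pickP => [x0|//]; rewrite inE.
by have [y yS ->] := fmax_in S f x xS; apply: H.
Qed.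

Lemma fmax_le S f m : 0 <= m -> (forall x, x \in S -> f x <= m) -> fmax S f <= m.
Proof.
move=> m0 H; case: (set_0Vmem S) => [->|[x xS]].
  by rewrite /fmax; case: pickP => [x0|//]; rewrite inE.
by have [y yS ->] := fmax_in S f x xS; apply: H.
Qed.

Lemma sum_sub_le (A B : {set U}) f :
  A \subset B -> (forall x, x \in B -> 0 <= f x) ->
  \sum_(x in A) f x <= \sum_(x in B) f x.
Proof.
move=> AB H; rewrite [X in _ <= X](big_setID A) /= (setIidPr AB) lerDl.
by apply: sumr_ge0 => x; rewrite inE => /andP[_ /H].
Qed.

End Fm.
Arguments fmin_in {R U S} f {x}.
Arguments fmax_in {R U S} f {x}.
Arguments fmin_le {R U S} f {x}.
Arguments fmax_ge {R U S} f {x}.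

Section Edges.
Variables (R : realDomainType) (V : finType).

Lemma edge_w_ge0 (c : V -> V -> R) e : (forall x y, 0 <= c x y) -> 0 <= edge_w c e.
Proof. by move=> H; apply: fmin_ge0 => p _; apply: H. Qed.

Lemma edge_w_pair (c : V -> V -> R) x y : (forall a b, c a b = c b a) -> x != y ->
  edge_w c [set x; y] = c x y.
Proof.
move=> sym nxy; rewrite /edge_w.
have xyS : (x, y) \in [set p in setX [set x; y] [set x; y] | p.1 != p.2].
  by rewrite !inE /= !eqxx /= orbT nxy.
have [[a b]] := fmin_in (fun p => c p.1 p.2) xyS.
rewrite !inE /= => /andP[/andP[/orP[/eqP->|/eqP->] /orP[/eqP->|/eqP->]] ne] -> /=.
all: try by rewrite eqxx in ne.
all: by rewrite // sym.
Qed.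

Lemma weight_ge0 (c : V -> V -> R) (F : {set {set V}}) : (forall x y, 0 <= c x y) -> 0 <= weight c F.
Proof. by move=> H; apply: sumr_ge0 => e _; apply: edge_w_ge0. Qed.

Lemma weight_sub (c : V -> V -> R) (F G : {set {set V}}) : (forall x y, 0 <= c x y) -> F \subset G ->
  weight c F <= weight c G.
Proof. by move=> H FG; apply: sum_sub_le => // e _; apply: edge_w_ge0. Qed.

Lemma weight_U (c : V -> V -> R) (F G : {set {set V}}) : (forall x y, 0 <= c x y) ->
  weight c (F :|: G) <= weight c F + weight c G.
Proof.
move=> H; rewrite /weight (big_setID F) /= setIUl setIid.
rewrite (_ : F :|: G :&: F = F); last by apply/setUidPl; apply: subsetIr.
rewrite lerD2l; apply: sum_sub_le; first by rewrite setDUl setDv set0U subsetDl.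
by move=> e _; apply: edge_w_ge0.
Qed.

Lemma weight_split (c : V -> V -> R) (F G : {set {set V}}) : G \subset F ->
  weight c F = weight c G + weight c (F :\: G).
Proof. by move=> GF; rewrite /weight (big_setID G) /= (setIidPr GF). Qed.

End Edges.
Arguments weight_sub {R V} c {F G}.
Arguments weight_U {R V} c F G.
Arguments weight_split {R V} c {F G}.
Arguments weight_ge0 {R V} c F.
Arguments edge_w_pair {R V} c x y.
Arguments edge_w_ge0 {R V} c e.

Section Graph.
Variable V : finType.

Lemma adj_sym (F : {set {set V}}) : symmetric (adj F).
Proof. by move=> x y; rewrite /adj /= setUC. Qed.

Lemma connect_hom (U : finType) (e : rel U) (e' : rel V) (f : U -> V) :
  (forall x y, e x y -> connect e' (f x) (f y)) ->
  forall x y, connect e x y -> connect e' (f x) (f y).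
Proof.
move=> H x y /connectP [p pth ->]; elim: p x pth => [|z p IH] x /=.
  by move=> _; apply: connect0.
by move=> /andP[exz pth]; apply: connect_trans (H _ _ exz) (IH _ pth).
Qed.

Lemma connect_inv (e : rel V) (A : {set V}) :
  (forall a b, e a b -> a \in A -> b \in A) ->
  forall x y, connect e x y -> x \in A -> y \in A.
Proof.
move=> H x y /connectP [p pth ->]; elim: p x pth => [|z p IH] x //=.
by move=> /andP[exz pth] xA; apply: IH pth (H _ _ exz xA).
Qed.

Lemma connect_mono (F G : {set {set V}}) x y : F \subset G ->
  connect (adj F) x y -> connect (adj G) x y.
Proof.
move=> FG; apply: (@connect_hom _ _ _ id) => a b ab; apply: connect1.
by rewrite /adj /= (subsetP FG).
Qed.

Lemma stE (S : {set V}) (F : {set {set V}}) : is_spanning_tree S F ->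
  [/\ (forall e, e \in F -> #|e| = 2 /\ e \subset S),
      (forall x y, x \in S -> y \in S -> connect (adj F) x y) &
      (forall e x y, e \in F -> x \in e -> y \in e -> x != y ->
          ~~ connect (adj (F :\ e)) x y)].
Proof.
case/and3P => /forallP H1 /forallP H2 /forallP H3; split.
- by move=> e eF; have /implyP/(_ eF)/andP[/eqP -> ->] := H1 e.
- by move=> x y xS yS; have /implyP/(_ xS)/forallP/(_ y)/implyP/(_ yS) := H2 x.
- move=> e x y eF xe ye nxy.
  have /implyP/(_ eF)/forallP/(_ x)/implyP/(_ xe)/forallP/(_ y)/implyP/(_ ye) := H3 e.
  by move/implyP; apply.
Qed.

Lemma stI (S : {set V}) (F : {set {set V}}) :
  (forall e, e \in F -> #|e| = 2 /\ e \subset S) ->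
  (forall x y, x \in S -> y \in S -> connect (adj F) x y) ->
  (forall e x y, e \in F -> x \in e -> y \in e -> x != y ->
          ~~ connect (adj (F :\ e)) x y) -> is_spanning_tree S F.
Proof.
move=> H1 H2 H3; apply/and3P; split.
- by apply/forallP => e; apply/implyP => /H1 [-> ->].
- by apply/forallP => x; apply/implyP => xS; apply/forallP => y; apply/implyP; apply: H2.
- apply/forallP => e; apply/implyP => eF; apply/forallP => x; apply/implyP => xe.
  by apply/forallP => y; apply/implyP => ye; apply/implyP; apply: H3.
Qed.

End Graph.
Arguments stE {V S F}.
Arguments stI {V S F}.
Arguments connect_inv {V e A}.
Arguments connect_mono {V F G x y}.
Arguments adj_sym {V}.
Arguments connect_hom {V U e e' f}.

Section Prim.
Variable V : finType.

Lemma in_pair_eq (u v a : V) (f : V -> V) : u != v -> f =1 (fun z => if z == v then u else z) ->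
  a \in [set u; v] -> f a = u.
Proof.
move=> nuv Hf; rewrite in_set2 Hf => /orP[/eqP->|/eqP->]; last by rewrite eqxx.
by rewrite (negbTE nuv).
Qed.

Lemma prim (x0 : V) (S : {set V}) (E : {set {set V}}) :
  (forall e, e \in E -> #|e| = 2 /\ e \subset S) ->
  (forall x y, x \in S -> y \in S -> connect (adj E) x y) ->
  exists F : {set {set V}}, exists ch : {set V} -> V,
    [/\ F \subset E, is_spanning_tree S F, {in F &, injective ch} &
        forall e, e \in F -> ch e \in e].
Proof.
move=> HE Hc.
case: (set_0Vmem S) => [S0|[s sS]].
  exists set0, (fun _ => x0); split; [exact: sub0set| |by move=> a b; rewrite inE|by move=> e; rewrite inE].
  by apply: stI => [e|x y|e x y]; rewrite ?S0 ?inE.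
suff: forall n U, #|S :\: U| = n -> s \in U -> U \subset S ->
  (exists F : {set {set V}}, exists ch : {set V} -> V,
    [/\ F \subset E, is_spanning_tree U F, {in F &, injective ch} &
        forall e, e \in F -> ch e \in e]) ->
  exists F : {set {set V}}, exists ch : {set V} -> V,
    [/\ F \subset E, is_spanning_tree S F, {in F &, injective ch} &
        forall e, e \in F -> ch e \in e].
  move=> /(_ _ [set s] erefl); apply; rewrite ?set11 ?sub1set //.
  exists set0, (fun _ => x0); split; [exact: sub0set| |by move=> a b; rewrite inE|by move=> e; rewrite inE].
  apply: stI => [e|x y|e x y]; rewrite ?inE //.
  by move=> /eqP-> /eqP->; apply: connect0.
elim=> [|n IH] U hn sU US [F [ch [FE FT Finj Fch]]].
  have -> : S = U; last by exists F, ch.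
  by apply/eqP; rewrite eqEsubset US andbT -setD_eq0 -cards_eq0 hn.
have [FT1 FT2 FT3] := stE FT.
have [y yS] : exists y, y \in S :\: U.
  by apply/set0Pn; rewrite -card_gt0 hn.
have [u [v [uU vU uvE]]] : exists u v, [/\ u \in U, v \notin U & [set u; v] \in E].
  case: (boolP [exists u, exists v, [&& u \in U, v \notin U & [set u; v] \in E]]).
    by case/existsP => u /existsP [v /and3P[*]]; exists u, v.
  move=> Hno; have cl : forall a b, adj E a b -> a \in U -> b \in U.
    move=> a b ab aU; apply/negPn/negP => bU; move/negP: Hno; apply.
    by apply/existsP; exists a; apply/existsP; exists b; rewrite aU bU.
  have := connect_inv cl _ _ (Hc _ _ sS (subsetP (subsetDl S U) _ yS)) sU.
  by move: yS; rewrite inE => /andP[/negbTE->].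
have nuv : u != v by apply: contraNneq vU => <-.
have [_ uvS] := HE _ uvE.
have vS : v \in S by apply: (subsetP uvS); rewrite set22.
pose F' := [set u; v] |: F.
pose ch' := fun e => if e == [set u; v] then v else ch e.
have FU : forall e, e \in F -> forall a, a \in e -> a \in U.
  by move=> e eF a ae; have [_ /subsetP] := FT1 e eF; apply.
have uvF : [set u; v] \notin F.
  by apply/negP => /FU /(_ v); rewrite set22 (negbTE vU) => /(_ erefl).
apply: (IH (v |: U)).
- apply/eqP; rewrite -eqSS -hn (cardsD1 v (S :\: U)) !inE vS vU /= add1n eqSS.
  rewrite (_ : S :\: (v |: U) = S :\: U :\ v) //.
  by apply/setP => z; rewrite !inE; case: (z == v).
- by rewrite setU1r.
- by apply/subsetP => z; rewrite in_setU1 => /orP[/eqP->//|/(subsetP US)].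
exists F', ch'; split.
- by rewrite subUset sub1set uvE FE.
- apply: stI.
  + move=> e; rewrite in_setU1 => /orP[/eqP->|eF].
      rewrite cards2 nuv; split => //; apply/subsetP => z.
      by rewrite in_set2 in_setU1 => /orP[/eqP->|/eqP->]; rewrite ?eqxx ?uU ?orbT.
    have [-> eS] := FT1 e eF; split => //; apply: subset_trans eS _.
    exact: subsetUr.
  + have H1 : forall a, a \in v |: U -> connect (adj F') u a.
      move=> a; rewrite in_setU1 => /orP[/eqP->|aU].
        by apply: connect1; rewrite /adj /= setU11.
      by apply: (connect_mono (subsetUr _ _)); apply: FT2.
    move=> a b aU bU; apply: connect_trans (H1 b bU).
    by rewrite (sym_connect_sym (@adj_sym _ F')) H1.
  + move=> e a b; rewrite in_setU1 => /orP[/eqP->|eF] ae be nab.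
      have key : ~~ connect (adj (F' :\ [set u; v])) u v.
        have clF : forall p q, adj (F' :\ [set u; v]) p q -> p \in U -> q \in U.
          move=> p q; rewrite /adj /= !inE => /andP[ne /orP[/eqP eq|pqF]].
            by rewrite eq eqxx in ne.
          move=> _; apply: (FU _ pqF); exact: set22.
        by apply/negP => /(connect_inv clF) /(_ uU); rewrite (negbTE vU).
      move: ae be nab; rewrite !in_set2.
      move=> /orP[/eqP->|/eqP->] /orP[/eqP->|/eqP->]; rewrite ?eqxx //.
      by rewrite (sym_connect_sym (@adj_sym _ _)).
    apply/negP => Hc'.
    have aU := FU _ eF _ ae; have bU := FU _ eF _ be.
    pose g := fun z => if z == v then u else z.
    have gid : forall z, z \in U -> g z = z.
      by move=> z zU; rewrite /g; case: eqP => // zv; move: vU; rewrite -zv zU.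
    have hom : forall p q, adj (F' :\ e) p q -> connect (adj (F :\ e)) (g p) (g q).
      move=> p q; rewrite /adj /= !inE => /andP[ne /orP[/eqP eq|pqF]].
        have gp : g p = u by apply: (@in_pair_eq u v p g nuv) => //; rewrite -eq set21.
        have gq : g q = u by apply: (@in_pair_eq u v q g nuv) => //; rewrite -eq set22.
        by rewrite gp gq connect0.
      rewrite !gid; first (by apply: connect1; rewrite /adj /= !inE ne pqF);
        by apply: (FU _ pqF); rewrite ?set21 ?set22.
    have := connect_hom hom _ _ Hc'.
    by rewrite !gid //; apply/negP; exact: FT3.
- move=> e1 e2; rewrite /ch' !in_setU1.
  case: eqP => [->|ne1] /= E1; case: eqP => [->|ne2] //= E2.
  + move=> vch; have := Fch _ E2; rewrite -vch => /(FU _ E2); by rewrite (negbTE vU).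
  + move=> vch; have := Fch _ E1; rewrite vch => /(FU _ E1); by rewrite (negbTE vU).
  + exact: Finj.
- move=> e; rewrite /ch' in_setU1; case: eqP => [->|_] /=; first by rewrite set22.
  exact: Fch.
Qed.

End Prim.

Lemma sum_imset_le (R : realDomainType) (I J : finType) (f : I -> J) (A : {set I})
  (g : J -> R) : (forall j, 0 <= g j) ->
  \sum_(j in f @: A) g j <= \sum_(i in A) g (f i).
Proof.
move=> g0; rewrite (partition_big_imset f) /=; apply: ler_sum => j /imsetP [i iA ->].
rewrite (bigD1 i) /= ?iA ?eqxx // lerDl; exact: sumr_ge0.
Qed.

Lemma extract (V : finType) (S : {set V}) (E : {set {set V}}) :
  (forall e, e \in E -> #|e| = 2 /\ e \subset S) ->
  (forall x y, x \in S -> y \in S -> connect (adj E) x y) ->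
  exists2 F : {set {set V}}, F \subset E & is_spanning_tree S F.
Proof.
move=> HE Hc; case: (set_0Vmem S) => [S0|[s sS]].
  exists set0; first exact: sub0set.
  by apply: stI => [e|x y|e x y]; rewrite ?S0 ?inE.
by have [F [ch [FE FT _ _]]] := @prim V s _ _ HE Hc; exists F.
Qed.

Section Main.
Context {R : realFieldType} {T : finType} {d : T -> T -> R}.
Hypothesis Hm : is_metric d.

Lemma d_xx x : d x x = 0.
Proof. by case: Hm => H _ _; apply/(H x x). Qed.

Lemma d_sym x y : d x y = d y x.
Proof. by case: Hm. Qed.

Lemma d_tri x y z : d x z <= d x y + d y z.
Proof. by case: Hm. Qed.

Lemma d_ge0 x y : 0 <= d x y.
Proof.
have := d_tri x y x; rewrite d_xx (d_sym y x) => h; lra.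
Qed.

Lemma d_gt0 x y : x != y -> 0 < d x y.
Proof.
move=> nxy; rewrite lt_def d_ge0 andbT; apply/eqP => h.
by case: Hm => H _ _; move/(H x y): h => e; rewrite e eqxx in nxy.
Qed.

Lemma edge_w_le x y : edge_w d [set x; y] <= d x y.
Proof.
case: (eqVneq x y) => [<-|nxy]; last by rewrite edge_w_pair //; exact: d_sym.
rewrite /edge_w fmin_empty ?d_ge0 //; apply/setP => [[a b]].
rewrite !inE /=; apply/negP => /andP[/andP[]].
by rewrite !orbb => /eqP-> /eqP->; rewrite eqxx.
Qed.

Context {Rep : {set T} -> {set T}}.

Lemma hatw_sym (A B : {set T}) : hatw d Rep A B = hatw d Rep B A.
Proof. by rewrite /hatw minC. Qed.

Lemma cost_ge0 (A RA : {set T}) : 0 <= cost d A RA.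
Proof. by apply: fmax_ge0 => x _; apply: fmin_ge0 => r _; exact: d_ge0. Qed.

Lemma hatw_le (A B : {set T}) x y : x \in A -> y \in B -> Rep B != set0 ->
  hatw d Rep A B <= d x y + cost d B (Rep B).
Proof.
move=> xA yB /set0Pn [r0 r0R].
have [r rR hr] := fmin_in (fun r => d y r) r0R.
apply: (le_trans (y := setdist d A (Rep B))); first by rewrite /hatw ge_min lexx.
apply: (le_trans (y := d x r)).
  by apply: (@fmin_le _ _ _ (fun p => d p.1 p.2) (x, r)); rewrite in_setX xA rR.
apply: (le_trans (d_tri x y r)); rewrite lerD2l -hr.
exact: (fmax_ge (fun z => fmin (Rep B) (fun r => d z r)) yB).
Qed.

Lemma keyK (P : {set {set T}}) (TP : {set {set {set T}}}) (F : {set {set T}}) :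
  partition P [set: T] ->
  (forall A, A \in P -> (Rep A \subset A) /\ Rep A != set0) ->
  is_MST P (hatw d Rep) TP ->
  (forall e, e \in F -> #|e| = 2) ->
  (forall x y, connect (adj F) x y) ->
  weight (hatw d Rep) TP <=
    weight d [set e in F | ~~ [exists A in P, e \subset A]] + costP d P Rep.
Proof.
move=> Hp HR HTP HF2 HFc.
case/and3P: Hp => /eqP cov triv n0.
have pbP x : pblock P x \in P by apply: pblock_mem; rewrite cov inE.
have pbx x : x \in pblock P x by rewrite mem_pblock cov inE.
have pbeq A x : A \in P -> x \in A -> pblock P x = A.
  by move=> hA hx; apply: def_pblock.
set C := [set e in F | _].
pose pi := fun e : {set T} => [set pblock P z | z in e].
have Ce : forall e, e \in C -> exists x y,
    [/\ x != y, e = [set x; y], pblock P x != pblock P y & e \in F].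
  move=> e; rewrite inE => /andP[eF nex].
  have /cards2P [x [y [nxy exy]]] : #|e| == 2 by rewrite HF2.
  exists x, y; split => //; apply: contraNneq nex => eq.
  apply/existsP; exists (pblock P x); rewrite pbP /=; apply/subsetP => z.
  by rewrite exy in_set2 => /orP[/eqP->|/eqP->]; [exact: pbx | rewrite eq; exact: pbx].
have pie x y : pi [set x; y] = [set pblock P x; pblock P y].
  by rewrite /pi imsetU1 imset_set1.
set E' := pi @: C.
have HE' : forall e', e' \in E' -> #|e'| = 2 /\ e' \subset P.
  move=> e' /imsetP [e eC ->]; have [x [y [_ -> ne _]]] := Ce e eC.
  rewrite pie cards2 ne; split => //; apply/subsetP => A.
  by rewrite in_set2 => /orP[/eqP->|/eqP->]; exact: pbP.
have HE'c : forall A B, A \in P -> B \in P -> connect (adj E') A B.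
  move=> A B AP BP.
  have [x xA] : exists x, x \in A by apply/set0Pn; apply: contraNneq n0 => <-.
  have [y yB] : exists y, y \in B by apply/set0Pn; apply: contraNneq n0 => <-.
  rewrite -(pbeq A x AP xA) -(pbeq B y BP yB).
  apply: (connect_hom _ _ _ (HFc x y)) => a b ab.
  case: (eqVneq (pblock P a) (pblock P b)) => [->|ne]; first exact: connect0.
  have abF : [set a; b] \in F := ab.
  apply: connect1; rewrite /adj /= -pie; apply: imset_f; rewrite inE abF /=.
  apply/existsP => [[A' /andP[A'P sub]]]; move/eqP: ne; apply.
  by rewrite (pbeq A' a A'P) ?(pbeq A' b A'P) // (subsetP sub) // ?set21 ?set22.
have [TP' [ch [TPE' TPst chinj chin]]] := @prim {set T} set0 _ _ HE' HE'c.
have h1 : weight (hatw d Rep) TP <= weight (hatw d Rep) TP'.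
  by case/andP: HTP => _ /forallP /(_ TP') /implyP; apply.
apply: le_trans h1 _.
pose pre := fun e' => odflt set0 [pick e in C | pi e == e'].
have preP : forall e', e' \in E' -> pre e' \in C /\ pi (pre e') = e'.
  move=> e' /imsetP [e eC ->]; rewrite /pre; case: pickP => [e2 /andP[e2C /eqP ->]|/(_ e)] //.
  by rewrite eC eqxx.
have bnd : forall e', e' \in TP' ->
    edge_w (hatw d Rep) e' <= edge_w d (pre e') + cost d (ch e') (Rep (ch e')).
  move=> e' e'T; have e'E := subsetP TPE' _ e'T; have [preC pie'] := preP e' e'E.
  have [x [y [nxy exy ne _]]] := Ce _ preC.
  move: pie' (chin _ e'T); rewrite exy pie => <-.
  rewrite edge_w_pair //; last exact: hatw_sym.
  rewrite edge_w_pair //; last exact: d_sym.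
  rewrite in_set2 => /orP[/eqP->|/eqP->].
    rewrite hatw_sym (d_sym x y); apply: hatw_le => //; exact: (HR _ (pbP x)).2.
  apply: hatw_le => //; exact: (HR _ (pbP y)).2.
rewrite /weight; apply: le_trans (ler_sum _ bnd) _.
rewrite big_split /=; apply: lerD.
  have preinj : {in TP' &, injective pre}.
    move=> e1 e2 h1' h2 eq; have [_ p1] := preP _ (subsetP TPE' _ h1').
    by have [_ p2] := preP _ (subsetP TPE' _ h2); rewrite -p1 -p2 eq.
  rewrite -(big_imset (fun e => edge_w d e) preinj) /=.
  apply: weight_sub; first exact: d_ge0.
  by apply/subsetP => e /imsetP [e' e'T ->]; exact: (preP _ (subsetP TPE' _ e'T)).1.
rewrite -(big_imset (fun A => cost d A (Rep A)) chinj) /=.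
apply: sum_sub_le; last by move=> A _; exact: cost_ge0.
apply/subsetP => A /imsetP [e' e'T ->].
have [_ /subsetP] := HE' _ (subsetP TPE' _ e'T); apply; exact: chin.
Qed.

End Main.

Theorem theorem1 (R : realFieldType) (T : finType) (d : T -> T -> R)
  (P : {set {set T}}) (Tr : {set T} -> {set {set T}}) (Rep : {set T} -> {set T})
  (Th Tstar TX : {set {set T}}) :
  is_metric d ->
  is_initial_forest P Tr ->
  (forall A, A \in P -> (Rep A \subset A) /\ Rep A != set0) ->
  MultiRepMFC_output d P Tr Rep Th ->
  is_MFC_opt d P Tr Tstar ->
  is_MST [set: T] d TX ->
  weight d Th <= alpha d P Tr Rep * weight d Tstar /\
  (0 < gamma_den d P ->
     weight d Th <= alpha d P Tr Rep * gamma d P Tr * weight d TX).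
Proof.
move=> Hm [Hp HTr] HR [TP [pr [HTP Hpr ->]]] Hopt HTX.
have dge0 := d_ge0 Hm.
have Hp' := Hp; case/and3P: Hp' => /eqP cov triv n0.
set Et := Et P Tr.
set a := weight d Et. set c := costP d P Rep.
have EtP : forall e, e \in Et -> #|e| = 2 /\ exists2 A, A \in P & e \subset A /\ e \in Tr A.
  move=> e /bigcupP [A AP eA]; have [H1 _ _] := stE (HTr A AP).
  by have [? ?] := H1 e eA; split => //; exists A.
have c0 : 0 <= c by apply: sumr_ge0 => A _; exact: cost_ge0.
have a0 : 0 <= a by apply: weight_ge0.
have hTh : weight d (Et :|: [set [set (pr e).1; (pr e).2] | e in TP])
    <= a + weight (hatw d Rep) TP.
  apply: le_trans (weight_U d _ _ dge0) _; rewrite lerD2l.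
  rewrite {1}/weight; apply: le_trans (@sum_imset_le _ _ _ _ _ (edge_w d) (fun j => edge_w_ge0 d j dge0)) _.
  apply: ler_sum => e eTP; apply: le_trans (edge_w_le Hm _ _) _.
  have [A [B [-> nAB _ ->]]] := Hpr e eTP.
  rewrite edge_w_pair //; exact: hatw_sym.
have notcross : forall F : {set {set T}}, F \subset [set: {set T}] -> True by [].
have part1 : weight d (Et :|: [set [set (pr e).1; (pr e).2] | e in TP])
    <= weight d Tstar + c.
  case/and3P: Hopt => Tst EtT _; have [S1 S2 _] := stE Tst.
  have K := keyK Hm _ _ _ Hp HR HTP (fun e eT => (S1 e eT).1) (fun x y => S2 x y (in_setT x) (in_setT y)).
  apply: le_trans hTh _; rewrite (weight_split d EtT) -/a -addrA lerD2l.
  apply: le_trans K _; rewrite lerD2r; apply: weight_sub => //.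
  apply/subsetP => e; rewrite !inE => /andP[eT nex]; rewrite eT andbT.
  apply/negP => eEt; have [_ [A AP [eA _]]] := EtP e eEt.
  by move/existsP: nex; apply; exists A; rewrite AP.
have zero : a = 0 -> c = 0.
  move=> a00; apply: big1 => A AP; apply/eqP; rewrite eq_le cost_ge0 // andbT.
  have TrA0 : Tr A = set0.
    apply/setP => e; rewrite inE; apply/negP => eA.
    have eEt : e \in Et by apply/bigcupP; exists A.
    have [/eqP /cards2P [x [y [nxy exy]]] _] := EtP e eEt.
    have h : weight d [set e] <= a by apply: weight_sub => //; rewrite sub1set.
    move: h; rewrite /weight big_set1 a00 exy (edge_w_pair d x y (d_sym Hm) nxy).
    by rewrite leNgt (d_gt0 Hm x y nxy).
  have [_ S2 _] := stE (HTr A AP); rewrite TrA0 in S2.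
  apply: fmax_le => // z zA.
  have [r rR] := set0Pn _ (HR A AP).2.
  have rA := subsetP (HR A AP).1 _ rR.
  have rz : r = z.
    have cl : forall p q, adj set0 p q -> p \in [set z] -> q \in [set z] by move=> p q; rewrite /adj /= in_set0.
    by have := connect_inv cl _ _ (S2 z r zA rA); rewrite !inE eqxx => /(_ erefl) /eqP.
  by apply: le_trans (fmin_le _ rR) _; rewrite rz (d_xx Hm).
split.
  apply: le_trans part1 _; rewrite /alpha -/Et -/a -/c.
  have [a00|apos] := eqVneq a 0.
    by rewrite (zero a00) mul0r !addr0 mul1r.
  have ap : 0 < a by rewrite lt_def apos a0.
  rewrite mulrDl mul1r lerD2l.
  case/and3P: Hopt => _ EtT _.
  have aW : a <= weight d Tstar by apply: weight_sub.
  rewrite -{1}(divfK apos c) ler_wpM2l //; exact: divr_ge0.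
move=> gpos.
have TXin : TX \in [set F | is_MST [set: T] d F] by rewrite inE.
have [Tm Tmin gde] := fmax_in (fun F => weight d (within_parts P F)) TXin.
move: Tmin; rewrite inE => TmM.
set b := weight d (within_parts P Tm) in gde.
have bpos : 0 < b by rewrite -gde.
have WW : weight d Tm = weight d TX.
  apply/eqP; rewrite eq_le; apply/andP; split.
    by case/andP: TmM => _ /forallP /(_ TX) /implyP; apply; case/andP: HTX.
  by case/andP: HTX => _ /forallP /(_ Tm) /implyP; apply; case/andP: TmM.
set W := weight d TX.
have [Tst1 Tst2 _] := stE (proj1 (andP TmM)).
have wpsub : within_parts P Tm \subset Tm by apply/subsetP => e; rewrite inE => /andP[].
have crossE : [set e in Tm | ~~ [exists A in P, e \subset A]] = Tm :\: within_parts P Tm.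
  by apply/setP => e; rewrite !inE; case: (e \in Tm); rewrite ?andbT ?andbF.
have Wsplit := weight_split d wpsub; rewrite -/b WW in Wsplit.
have bW : b <= W by rewrite /W Wsplit lerDl; apply: weight_ge0.
have ba : b <= a.
  pose T' := (Tm :\: within_parts P Tm) :|: Et.
  have H1 : forall e, e \in T' -> #|e| = 2 /\ e \subset [set: T].
    move=> e; rewrite inE => /orP[|/EtP[-> _]]; last by rewrite subsetT.
    by rewrite inE => /andP[_ /Tst1].
  have H2 : forall x y, x \in [set: T] -> y \in [set: T] -> connect (adj T') x y.
    move=> x y _ _; apply: (@connect_hom _ _ _ _ id _ _ _ (Tst2 x y (in_setT x) (in_setT y))).
    move=> p q pq; have pqT : [set p; q] \in Tm := pq.
    case: (boolP ([set p; q] \in within_parts P Tm)) => wp.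
      move: (wp); rewrite inE => /andP[_ /existsP [A /andP[AP sub]]].
      have [_ S2 _] := stE (HTr A AP).
      apply: (connect_mono (F := Tr A)).
        by apply/subsetP => e eA; rewrite inE; apply/orP; right; apply/bigcupP; exists A.
      by apply: S2; apply: (subsetP sub); rewrite ?set21 ?set22.
    by apply: connect1; rewrite /adj /= inE; apply/orP; left; rewrite inE wp.
  have [T'' T''sub T''st] := extract _ _ _ H1 H2.
  have : weight d Tm <= weight d T''.
    by case/andP: TmM => _ /forallP /(_ T'') /implyP; apply.
  rewrite WW Wsplit => h.
  have h2 := weight_sub d dge0 T''sub.
  have h3 := weight_U d (Tm :\: within_parts P Tm) Et dge0.
  rewrite -/a in h3; lra.
have K := keyK Hm _ _ _ Hp HR HTP (fun e eT => (Tst1 e eT).1) (fun x y => Tst2 x y (in_setT x) (in_setT y)).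
rewrite crossE in K.
have bound : weight d (Et :|: [set [set (pr e).1; (pr e).2] | e in TP]) <= a + (W - b) + c.
  apply: le_trans hTh _; rewrite -addrA lerD2l; apply: le_trans K _.
  by rewrite lerD2r /W Wsplit addrC addKr.
apply: le_trans bound _.
rewrite /alpha /gamma -/Et -/a -/c (_ : gamma_den d P = b) //.
have ap : 0 < a by apply: lt_le_trans ba.
have -> : (1 + c / a) * (a / b) * W = ((a + c) * W) / b.
  by field; rewrite ?gt_eqF.
rewrite ler_pdivlMr //.
have h1 : 0 <= a + c - b by lra.
have h2 : 0 <= W - b by lra.
nra.
Qed.
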